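(* Let $V$ be a finite nonempty set, $U,U'\subseteq V$ disjoint, $U''=V\setminus(U\cup U')$, $i\in U$, $j\in U'$, and $\hat x$ a maximally specific partial function on $P_V$. Let $P'_{01}=\{pq\in U\times U'\mid \hat x_{pi}\neq 0\neq \hat x_{jq}\}\setminus\hat x^{-1}(1)$ and $P'_{10}=\big((U''\times U)\cup(U'\times U)\cup(U'\times U'')\big)\setminus\hat x^{-1}(0)$. If $\hat x^{-1}(0)\cap P'_{01}=\emptyset$ and $\hat x^{-1}(1)\cap P'_{10}=\emptyset$, then $\gamma^{ij|1}(X_V[\hat x])\subseteq X_V[\hat x]$.
   Context: $P_V=\{pq\in V^2\mid p\neq q\}$; $X_V$ is the set of $x\in\{0,1\}^{P_V}$ with $x_{pq}+x_{qr}-x_{pr}\le 1$ for all pairwise distinct $p,q,r\in V$. A partial function $\tilde x$ is a map from $\operatorname{dom}(\tilde x)\subseteq P_V$ to $\{0,1\}$, $\tilde x^{-1}(b)$ the pairs mapped to $b$; convention $\tilde x_{aa}=1$ and $x_{aa}=1$ for all $a\in V$, $x\in X_V$. $X_V[\tilde x]=\{x\in X_V\mid x_{pq}=\tilde x_{pq}\ \forall pq\in\operatorname{dom}(\tilde x)\}$. A pair $pq$ is decided if $x_{pq}=x'_{pq}$ for all $x,x'\in X_V[\tilde x]$; $\tilde x$ is maximally specific if $X_V[\tilde x]\ne\emptyset$ and the decided pairs are exactly $\operatorname{dom}(\tilde x)$. For $A,B\subseteq V$ disjoint with $A\cup B=V$, $\sigma_{A\times B}\colon X_V\to X_V$ sets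 $\sigma_{A\times B}(x)_{pq}=0$ if $pq\in A\times B$ and $=x_{pq}$ otherwise. For $ij\in P_V$, $\sigma_{ij}\colon X_V\to X_V$ sets $\sigma_{ij}(x)_{pq}=1$ if $x_{pi}=x_{jq}=1$ and $=x_{pq}$ otherwise. Let $\gamma=\sigma_{ij}\circ\sigma_{(V\setminus U)\times U}\circ\sigma_{U'\times(V\setminus U')}$ and $\gamma^{ij|1}\colon X_V[\hat x]\to X_V$ with $\gamma^{ij|1}(x)=x$ if $x_{ij}=1$ and $\gamma^{ij|1}(x)=\gamma(x)$ if $x_{ij}=0$. *)

(* Defs.v *)
From mathcomp Require Import all_boot.
Set Implicit Arguments. Unset Strict Implicit. Unset Printing Implicit Defensive.

Section Defs.
Variable V : finType.

(* An element x of {0,1}^{P_V} is represented as a relation V -> V -> bool;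
   diagonal values are ignored (convention x_aa = 1 is applied via [ev]). *)
Definition ev (x : rel V) (p q : V) : bool := (p == q) || x p q.

Definition inX (x : rel V) : Prop :=
  forall p q r : V, p != q -> q != r -> p != r -> x p q -> x q r -> x p r.

(* Partial functions P_V -> {0,1}: None = undefined; diagonal values ignored. *)
Definition pfun := V -> V -> option bool.

Definition hval (xh : pfun) (p q : V) : option bool :=
  if p == q then Some true else xh p q.

Definition indom (xh : pfun) (p q : V) : Prop := p != q /\ xh p q <> None.

Definition hinv (xh : pfun) (b : bool) : {set V * V} :=
  [set pq | (pq.1 != pq.2) && (xh pq.1 pq.2 == Some b)].

Definition inXh (xh : pfun) (x : rel V) : Prop :=
  inX x /\ forall (p q : V) (b : bool), p != q -> xh p q = Some b -> x p q = b.

Definition decided (xh : pfun) (p q : V) : Prop :=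
  forall x x' : rel V, inXh xh x -> inXh xh x' -> x p q = x' p q.

Definition max_specific (xh : pfun) : Prop :=
  (exists x, inXh xh x) /\
  forall p q : V, p != q -> (decided xh p q <-> indom xh p q).

Definition sigmaAB (A B : {set V}) (x : rel V) : rel V :=
  fun p q => if (p \in A) && (q \in B) then false else x p q.

Definition sigmaij (i j : V) (x : rel V) : rel V :=
  fun p q => if ev x p i && ev x j q then true else x p q.

Definition gamma (U U' : {set V}) (i j : V) (x : rel V) : rel V :=
  sigmaij i j (sigmaAB (~: U) U (sigmaAB U' (~: U') x)).

Definition gamma1 (U U' : {set V}) (i j : V) (x : rel V) : rel V :=
  if x i j then x else gamma U U' i j x.

Definition P01' (xh : pfun) (U U' : {set V}) (i j : V) : {set V * V} :=
  [set pq in setX U U' | (hval xh pq.1 i != Some false)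
                          && (hval xh j pq.2 != Some false)] :\: hinv xh true.

Definition P10' (xh : pfun) (U U' : {set V}) : {set V * V} :=
  let U'' := ~: (U :|: U') in
  (setX U'' U :|: setX U' U :|: setX U' U'') :\: hinv xh false.

End Defs.

(* Main.v *)
Require Import Defs.
From mathcomp Require Import all_boot.

Section Aux.
Variable V : finType.
Implicit Types (x : rel V).

Lemma evT x : inX x -> forall p q r, ev x p q -> ev x q r -> ev x p r.
Proof.
move=> hx p q r; rewrite /ev.
case: (eqVneq p q) => [->|npq] //=.
case: (eqVneq q r) => [<-|nqr] //=; first by move=> ->; rewrite orbT.
case: (eqVneq p r) => [->|npr] //= h1 h2.
exact: (hx p q r).
Qed.

Lemma inX_ev x : (forall p q r, ev x p q -> ev x q r -> ev x p r) -> inX x.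
Proof.
move=> H p q r npq nqr npr xpq xqr.
have := H p q r; rewrite /ev (negbTE npq) (negbTE nqr) (negbTE npr) /=.
by apply.
Qed.

Lemma sigmaAB_X (A B : {set V}) x :
  (forall v, (v \in A) = (v \notin B)) -> inX x -> inX (sigmaAB A B x).
Proof.
move=> hAB hx p q r npq nqr npr; rewrite /sigmaAB !hAB.
case: (p \in B); case: (q \in B); case: (r \in B) => //=;
  try by move=> h1 h2; apply: (hx p q r).
Qed.

Lemma evE (i j : V) x p q :
  ev (sigmaij i j x) p q = ev x p q || (ev x p i && ev x j q).
Proof.
rewrite /ev /sigmaij; case: (p == q) => //=.
by case: ifP => _; rewrite ?orbT ?orbF.
Qed.

Lemma sigmaij_X (i j : V) x : inX x -> inX (sigmaij i j x).
Proof.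
move=> hx; apply: inX_ev => p q r; rewrite !evE.
have T := @evT x hx.
case/orP=> [h1|/andP[h1 h2]]; case/orP=> [h3|/andP[h3 h4]]; apply/orP.
- by left; exact: T h1 h3.
- by right; rewrite (T _ _ _ h1 h3) h4.
- by right; rewrite h1 (T _ _ _ h2 h3).
- by right; rewrite h1 h4.
Qed.

Lemma sigmaAB_le (A B : {set V}) x u v : sigmaAB A B x u v -> x u v.
Proof. by rewrite /sigmaAB; case: ifP. Qed.

Lemma ev_le x x' u v : (forall a b, x' a b -> x a b) -> ev x' u v -> ev x u v.
Proof. by move=> H; rewrite /ev; case/orP=> [->|/H ->]; rewrite ?orbT. Qed.

End Aux.

Theorem corollary6p5 (V : finType) (U U' : {set V}) (i j : V) (xh : pfun V) :
  0 < #|V| ->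
  [disjoint U & U'] ->
  i \in U -> j \in U' ->
  max_specific xh ->
  hinv xh false :&: P01' xh U U' i j = set0 ->
  hinv xh true :&: P10' xh U U' = set0 ->
  forall x : rel V, inXh xh x -> inXh xh (gamma1 U U' i j x).
Proof.
move=> _ hdisj iU jU' _ h01 h10 x [hx hc].
have hd : forall v, v \in U -> v \in U' -> False.
  move=> v a b; move: hdisj; rewrite disjoint_subset => /subsetP/(_ v a).
  by rewrite inE b.
rewrite /gamma1; case: ifP => xij; first by split.
split.
  apply: sigmaij_X; apply: sigmaAB_X; first by move=> v; rewrite in_setC.
  by apply: sigmaAB_X => // v; rewrite in_setC negbK.
move=> p q b npq hpq.
have xpq := hc p q b npq hpq.
have hv : forall u v, ev x u v -> hval xh u v != Some false.
  move=> u v; rewrite /ev /hval; case: eqP => //= /eqP nuv xuv.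
  by apply/eqP => e; have := hc u v false nuv e; rewrite xuv.
rewrite /gamma /sigmaij.
case: b hpq xpq => hpq xpq.
- case: ifP => // _.
  have H : (p, q) \in hinv xh true :&: P10' xh U U' -> False by rewrite h10 inE.
  rewrite /sigmaAB xpq.
  move: H (hd p) (hd q); rewrite !inE /= npq hpq /=.
  case: (p \in U); case: (p \in U'); case: (q \in U); case: (q \in U') => //=;
  by move=> H; exfalso; apply: H.
  rewrite /sigmaAB xpq !if_same.
  case: ifP => // hA; move/andP: hA => [h1 h2].
  have hp1 : hval xh p i != Some false.
    apply: hv; apply: (@ev_le V x _ p i _ h1) => a b; by do 2 case: ifP => //.
  have hp2 : hval xh j q != Some false.
    apply: hv; apply: (@ev_le V x _ j q _ h2) => a b; by do 2 case: ifP => //.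
  have pU : p \in U.
    case: (eqVneq p i) h1 => [->//|npi]; rewrite /ev (negbTE npi) /= /sigmaAB.
    by rewrite inE iU andbT; case: (p \in U).
  have jU : j \notin U by apply/negP => /hd/(_ jU').
  have qU' : q \in U'.
    case: (eqVneq j q) h2 => [<-//|njq]; rewrite /ev (negbTE njq) /= /sigmaAB.
    by rewrite !inE jU jU' /=; case: (q \in U'); case: (q \in U) => //=; rewrite andbF.
  have H : (p, q) \in hinv xh false :&: P01' xh U U' i j -> False
    by rewrite h01 inE.
  exfalso; apply: H; rewrite !inE /= npq hpq /= pU qU' hp1 hp2. by [].
Qed.
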